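(* When the algorithm Classifier is run on any configuration $G$ with $n$ nodes, there exists an iteration $i\in\{1,\ldots,\lceil n/2\rceil\}$ of its main loop in which either the ''Yes'' condition or the ''No'' condition holds, so that Classifier terminates with an output.
   Context: A configuration is a finite simple undirected connected graph $G$ with $n$ nodes, each node $v$ having a non-negative integer wakeup tag $t_v$; the span $\sigma$ is the largest tag (the smallest tag being $0$). Algorithm Classifier (centralized, input $G$). It maintains a partition of the nodes into classes, with $\mathrm{class}(v)\in\{1,\ldots,\mathit{numClasses}\}$. Initially all nodes are in class $1$ and $\mathit{numClasses}=1$. One iteration (procedure Partitioner) does: for each node $v$, compute its label $L_v$, the set of triples obtained as follows: for each neighbour $w$ of $v$ with $\mathrm{class}(w)\ne\mathrm{class}(v)$ or $t_w\ne t_v$, form the pair $(\mathrm{class}(w),\sigma+1+t_w-t_v)$; for each distinct pair $(a,b)$ so formed, $L_v$ contains $(a,b,1)$ if exactly one such neighbour yields $(a,b)$ and $(a,b,* )$ if at least two do. Then the partition is refined: two nodes are in the same new class iff they were in the same class before the iteration and have equal labels; classes are renumbered $1,\ldots,\mathit{numClasses}$ with $\mathit{numClasses}$ the new number of classes. Main loop: for $i=1,\ldots,\lceil n/2\rceil$: let $\mathit{old}=\mathit{numClasses}$; perform one iteration; if some class contains exactly one node, output ''Yes'' and stop (the ''Yes'' condition); otherwise, if $\mathit{numClasses}=\mathit{old}$, output ''No'' and stop (the ''No'' condition). *)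

(* Defs.v *)
From mathcomp Require Import all_boot.
Set Implicit Arguments. Unset Strict Implicit. Unset Printing Implicit Defensive.

Section Classifier.
Variables (V : finType) (adj : rel V) (t : V -> nat).

Definition span : nat := \max_(v : V) t v.

(* a partition is represented by the map v |-> class of v (the set of nodes
   in the same class); the class identifier used in labels is this set *)
Definition partition := V -> {set V}.

Definition init_part : partition := fun _ => [set: V].

Definition label_pairs (cls : partition) (v : V) : seq ({set V} * nat) :=
  [seq (cls w, span.+1 + t w - t v)
    | w <- enum V & adj v w && ((cls w != cls v) || (t w != t v))].

(* the label L_v: triples (a, b, m) where m = false means "1" and
   m = true means "*" (at least two neighbours) *)
Definition label (cls : partition) (v : V) : seq ({set V} * nat * bool) :=
  [seq (p.1, p.2, 1 < count (pred1 p) (label_pairs cls v))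
    | p <- undup (label_pairs cls v)].

Definition label_eq (cls : partition) (u v : V) : bool :=
  all (fun x => x \in label cls v) (label cls u) &&
  all (fun x => x \in label cls u) (label cls v).

Definition partitioner (cls : partition) : partition :=
  fun v => [set u | (cls u == cls v) && label_eq cls u v].

Definition part_after (i : nat) : partition := iter i partitioner init_part.

Definition numClasses (cls : partition) : nat := #|[set cls v | v in V]|.

Definition yes_cond (i : nat) : Prop := exists v : V, #|part_after i v| = 1.

Definition no_cond (i : nat) : Prop :=
  numClasses (part_after i) = numClasses (part_after i.-1).

End Classifier.

Definition simple_graph (V : finType) (adj : rel V) : Prop :=
  irreflexive adj /\ symmetric adj.
Definition connected_graph (V : finType) (adj : rel V) : Prop :=
  forall x y : V, connect adj x y.

(* Main.v *)
From Stdlib Require Import Classical.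
Require Import Defs.
From mathcomp Require Import all_boot.
From mathcomp Require Import zify.

Section Aux.
Variables (V : finType) (adj : rel V) (t : V -> nat).

Definition inv (cls : Defs.partition V) := forall u v, (u \in cls v) = (cls u == cls v).

Lemma label_eq_refl cls u : label_eq adj t cls u u.
Proof. by rewrite /label_eq andbb; apply/allP. Qed.

Lemma label_eq_sym cls u v : label_eq adj t cls u v = label_eq adj t cls v u.
Proof. by rewrite /label_eq andbC. Qed.

Lemma label_eq_trans cls u v w :
  label_eq adj t cls u v -> label_eq adj t cls v w -> label_eq adj t cls u w.
Proof.
move=> /andP[/allP h1 /allP h2] /andP[/allP h3 /allP h4]; apply/andP; split;
  apply/allP => x hx; [exact/h3/h1 | exact/h2/h4].
Qed.

Lemma inv_init : inv (@init_part V).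
Proof. by move=> u v; rewrite /init_part in_setT eqxx. Qed.

Lemma inv_step cls : inv cls -> inv (partitioner adj t cls).
Proof.
move=> H u v; rewrite /partitioner inE.
apply/idP/eqP.
- move=> /andP[/eqP e l]; apply/setP => w; rewrite !inE; apply/andP/andP.
  + case=> /eqP e1 l1; split; [by rewrite e1 e | exact: label_eq_trans l1 l].
  + case=> /eqP e1 l1; split; [by rewrite e1 -e |].
    by apply: label_eq_trans l1 _; rewrite label_eq_sym.
- move=> e.
  have : u \in [set w | (cls w == cls u) && label_eq adj t cls w u].
    by rewrite inE eqxx label_eq_refl.
  by rewrite e inE.
Qed.

Lemma inv_after i : inv (part_after adj t i).
Proof. elim: i => [|i IH]; [exact: inv_init | exact: inv_step]. Qed.

Lemma mono cls : inv cls -> numClasses cls <= numClasses (partitioner adj t cls).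
Proof.
move=> H; rewrite /numClasses.
pose h (S : {set V}) := \bigcup_(u in S) cls u.
have hv v : h (partitioner adj t cls v) = cls v.
  apply/setP => w; apply/bigcupP/idP.
  - case=> u; rewrite /partitioner inE => /andP[/eqP e _].
    by rewrite e.
  - move=> hw; exists v => //.
    by rewrite /partitioner inE eqxx label_eq_refl.
have -> : [set cls v | v in V] = h @: [set partitioner adj t cls v | v in V].
  by rewrite -imset_comp; apply: eq_imset => v /=; rewrite hv.
exact: leq_imset_card.
Qed.

Lemma upper cls : inv cls -> (forall v, #|cls v| != 1) -> (numClasses cls).*2 <= #|V|.
Proof.
move=> H H1; rewrite /numClasses.
set P := [set cls v | v in V].
have hp : partition P [set: V].
  apply/and3P; split.
  - apply/eqP/setP => w; rewrite in_setT; apply/bigcupP; exists (cls w).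
      exact: imset_f.
    by rewrite H.
  - apply/trivIsetP => A B /imsetP[u _ ->] /imsetP[v _ ->] ne.
    rewrite -setI_eq0; apply/eqP/setP => w; rewrite in_set0 inE !H.
    apply/negP => /andP[/eqP e1 /eqP e2].
    by move: ne; rewrite -e1 -e2 eqxx.
  - apply/imsetP => -[v _ e].
    have : v \in cls v by rewrite H.
    by rewrite -e inE.
rewrite -cardsT (card_partition hp) -muln2 -sum_nat_const.
apply: leq_sum => A /imsetP[v _ ->].
have : 0 < #|cls v| by apply/card_gt0P; exists v; rewrite H.
by move: (H1 v); case: #|cls v| => [|[|n]].
Qed.

Lemma grow (v0 : V) j :
  (forall i, 0 < i <= j ->
     numClasses (part_after adj t i) != numClasses (part_after adj t i.-1)) ->
  j.+1 <= numClasses (part_after adj t j).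
Proof.
elim: j => [_ | j IH Hn].
- apply/card_gt0P; exists (part_after adj t 0 v0); exact: imset_f.
- have h1 := IH (fun i hi => Hn i ltac:(case/andP: hi => a b; rewrite a; exact: leq_trans b _)).
  have h2 : numClasses (part_after adj t j.+1) != numClasses (part_after adj t j)
    := Hn j.+1 (leqnn _).
  have h3 : numClasses (part_after adj t j) <= numClasses (part_after adj t j.+1)
    := mono _ (inv_after j).
  move: h2 => /eqP h2; lia.
Qed.

End Aux.

Theorem lemma1 (V : finType) (adj : rel V) (t : V -> nat) :
  simple_graph adj -> connected_graph adj -> (exists v : V, t v = 0) ->
  exists i : nat, 1 <= i <= uphalf #|V| /\
    (yes_cond adj t i \/ no_cond adj t i).
Proof.
move=> _ _ [v0 _].
apply: NNPP => Hn.
have Hall i : 1 <= i <= uphalf #|V| -> ~ yes_cond adj t i /\ ~ no_cond adj t i.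
  by move=> hi; split => h; apply: Hn; exists i; split => //; [left | right].
set k := uphalf #|V|.
have hk : 1 <= k.
  rewrite /k; have : 0 < #|V| by apply/card_gt0P; exists v0.
  by case: #|V| => [|n].
have g := @grow V adj t v0 k (fun i hi => introN eqP (proj2 (Hall i hi))).
have ny : forall v, #|part_after adj t k v| != 1.
  move=> v; apply/eqP => e; apply: (proj1 (Hall k _)); first by rewrite hk leqnn.
  by exists v.
have u := @upper V (part_after adj t k) (@inv_after V adj t k) ny.
have : (k.+1).*2 <= #|V| by apply: leq_trans u; rewrite leq_double.
rewrite /k uphalf_half.
have := odd_double_half #|V|.
move: #|V| => n.
rewrite -!muln2; case: (odd n) => /=; lia.
Qed.
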